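(* Let $\tau>0$ and $S\subset V$, and let $S'=\{i\in V:(e^{-\tau\Delta}\chi_S)_i\ge\frac12\}$ be the result of one MBO iteration started from $S$. Let $\rho$ be the spectral radius of $\Delta$. Then $S'=S$, i.e. the MBO iterates starting from $S$ are stationary, if either of the following holds: (i) $S\ne\emptyset$ and $$\tau<\tau_\rho(S):=\rho^{-1}\log\Big(1+\tfrac12\,d_-^{r/2}(\mathrm{vol}\,S)^{-1/2}\Big);$$ (ii) $\Delta\chi_S\ne0$ and $$\tau\le\tau_\kappa(S):=\frac1{2\max_{i\in V}|(\Delta\chi_S)_i|}.$$
   Context: $G=(V,E)$ is a finite undirected weighted graph with vertex set $V=\{1,\dots,n\}$. The weights satisfy $\omega_{ij}=\omega_{ji}\ge0$, with $\omega_{ij}>0$ iff $\{i,j\}\in E$, and $\omega_{ii}=0$. The degrees are $d_i=\sum_j\omega_{ij}>0$, and $d_-=\min_id_i$. A parameter $r\in[0,1]$ is fixed. $\mathcal V$ is the space of functions $V\to\mathbb R$ with $\langle u,v\rangle_{\mathcal V}=\sum_iu_iv_id_i^r$. For $S\subset V$, $\chi_S$ is the indicator of $S$ and $\mathrm{vol}\,S=\sum_{i\in S}d_i^r$. The graph Laplacian is $(\Delta u)_i=d_i^{-r}\sum_j\omega_{ij}(u_i-u_j)$, which is self-adjoint and positive semidefinite for $\langle\cdot,\cdot\rangle_{\mathcal V}$. $e^{-t\Delta}$ is the solution operator of $\dot u=-\Delta u$. *)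

(* Defs.v *)
From Stdlib Require Import Reals Lra List.
Import ListNotations.
Open Scope R_scope.

(* Vertices are 0, ..., n-1 (the paper's 1..n shifted).
   Weights w : nat -> nat -> R, functions on V are nat -> R (only i < n matter),
   subsets S of V are boolean predicates nat -> bool (only i < n matter). *)

Definition sumV (n : nat) (f : nat -> R) : R :=
  fold_right (fun i acc => f i + acc) 0 (seq 0 n).

Definition deg (n : nat) (w : nat -> nat -> R) (i : nat) : R :=
  sumV n (fun j => w i j).

(* d_- = min_i d_i  (V assumed nonempty when this matters) *)
Definition dmin (n : nat) (w : nat -> nat -> R) : R :=
  fold_right Rmin (deg n w 0) (map (deg n w) (seq 0 n)).

Definition chi (S : nat -> bool) (i : nat) : R := if S i then 1 else 0.

Definition vol (n : nat) (w : nat -> nat -> R) (r : R) (S : nat -> bool) : R :=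
  sumV n (fun i => if S i then Rpower (deg n w i) r else 0).

Definition Lap (n : nat) (w : nat -> nat -> R) (r : R) (u : nat -> R) (i : nat) : R :=
  Rpower (deg n w i) (- r) * sumV n (fun j => w i j * (u i - u j)).

Definition weighted_graph (n : nat) (w : nat -> nat -> R) : Prop :=
  (forall i j, (i < n)%nat -> (j < n)%nat -> w i j = w j i) /\
  (forall i j, (i < n)%nat -> (j < n)%nat -> 0 <= w i j) /\
  (forall i, (i < n)%nat -> w i i = 0) /\
  (forall i, (i < n)%nat -> 0 < deg n w i).

(* lam is an eigenvalue of Delta (Delta is self-adjoint for <.,.>_V, so all
   its eigenvalues are real) *)
Definition is_eigenvalue (n : nat) (w : nat -> nat -> R) (r : R) (lam : R) : Prop :=
  exists v : nat -> R, (exists i, (i < n)%nat /\ v i <> 0) /\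
    (forall i, (i < n)%nat -> Lap n w r v i = lam * v i).

Definition is_spectral_radius (n : nat) (w : nat -> nat -> R) (r : R) (rho : R) : Prop :=
  (exists lam, is_eigenvalue n w r lam /\ Rabs lam = rho) /\
  (forall lam, is_eigenvalue n w r lam -> Rabs lam <= rho).

(* u : R -> (V -> R) solves du/dt = - Delta u with u(0) = u0,
   i.e. u t = e^{-t Delta} u0 *)
Definition heat_solution (n : nat) (w : nat -> nat -> R) (r : R)
    (u0 : nat -> R) (u : R -> nat -> R) : Prop :=
  (forall i, (i < n)%nat -> u 0 i = u0 i) /\
  (forall t i, (i < n)%nat ->
     derivable_pt_lim (fun s => u s i) t (- Lap n w r (u t) i)).

Definition maxabs (n : nat) (f : nat -> R) : R :=
  fold_right Rmax 0 (map (fun i => Rabs (f i)) (seq 0 n)).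

Definition tau_rho (n : nat) (w : nat -> nat -> R) (r rho : R) (S : nat -> bool) : R :=
  / rho * ln (1 + / 2 * Rpower (dmin n w) (r / 2) * Rpower (vol n w r S) (- (1 / 2))).

Definition tau_kappa (n : nat) (w : nat -> nat -> R) (r : R) (S : nat -> bool) : R :=
  / (2 * maxabs n (Lap n w r (chi S))).

(* Main.v *)
Require Import Defs.
From Stdlib Require Import Reals List.
From Stdlib Require Import Lra.
From HB Require Import structures.
From mathcomp Require all_boot all_order all_algebra Rstruct.

Module MC.
Import structures.
Import all_boot all_order all_algebra Rstruct.
Import Order.TTheory GRing.Theory Num.Theory.


Lemma seq_iota a n : List.seq a n = iota a n.
Proof. by elim: n a => //= n IH a; rewrite IH. Qed.

Lemma sumV_big n (f : nat -> R) : sumV n f = (\sum_(j < n) f j)%R.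
Proof.
rewrite /sumV seq_iota -(big_mkord xpredT f) /index_iota subn0.
elim: (iota 0 n) => [|x s IH]; first by rewrite big_nil.
by rewrite big_cons /= IH.
Qed.

Lemma kernel_or_bounded n (a : nat -> nat -> R) :
 (exists v : nat -> R, (exists i, Peano.lt i n /\ v i <> 0) /\
    forall i, Peano.lt i n -> sumV n (fun j => a i j * v j) = 0)
 \/ exists K, forall (x : nat -> R) i, Peano.lt i n ->
     Rabs (x i) <= K * sumV n (fun j => Rabs (sumV n (fun k => a j k * x k))).
Proof.
Local Open Scope ring_scope.
pose A : 'M[R]_n := \matrix_(i < n, j < n) a i j.
have [/det0P [v v0 vA]|dA] := boolP (\det A^T == 0).
  left; exists (fun j => if insub j is Some k then v ord0 k else 0).
  split.
    have [j vj] : exists j, v ord0 j != 0.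
      apply/existsP; apply: contraNT v0 => /existsPn H.
      by apply/eqP/rowP => j; rewrite mxE; apply/eqP/negbNE/H.
    exists (nat_of_ord j); split.
      by apply/ssrnat.ltP; exact: ltn_ord.
    by rewrite (valK j); apply/eqP.
  move=> i /ssrnat.ltP lin; rewrite sumV_big.
  transitivity ((v *m A^T) ord0 (Ordinal lin)); last by rewrite vA mxE.
  rewrite mxE.
  apply: eq_bigr => j _; rewrite !mxE mulrC; congr (_ * _).
  by rewrite (valK j).
right.
have Au : A \in unitmx by rewrite -unitmx_tr unitmxE unitfE.
pose B := invmx A.
exists (\sum_(i < n) \sum_(j < n) `|B i j|) => x i /ssrnat.ltP lin.
pose I := Ordinal lin.
have xe : x i = \sum_(j < n) B I j * sumV n (fun k => a j k * x k).
  under eq_bigr do rewrite sumV_big.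
  rewrite (eq_bigr (fun j => \sum_(k<n) B I j * (a j k * x k))) ; last by move=> j _; rewrite mulr_sumr.
  rewrite exchange_big /=.
  rewrite (eq_bigr (fun k => (B *m A) I k * x k)); last first.
    move=> k _; rewrite !mxE mulr_suml; apply: eq_bigr => j _; rewrite !mxE mulrA.
    done.
  rewrite mulVmx // (bigD1 I) //= big1 ?addr0; last first.
    by move=> k kI; rewrite mxE eq_sym (negbTE kI) mul0r.
  by rewrite mxE eqxx mul1r.
apply/Rstruct.RleP.
rewrite xe sumV_big Rstruct.RmultE mulr_sumr.
have nE : forall y : R, Rabs y = `|y| by [].
rewrite nE.
apply: (@le_trans _ _ (\sum_(j<n) `|B I j * sumV n (fun k => a j k * x k)|)).
  exact: ler_norm_sum.
apply: ler_sum => j _.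
rewrite normrM.
apply: ler_wpM2r; first exact: normr_ge0.
rewrite (bigD1 I) //= (bigD1 j) //= -addrA lerDl.
apply: addr_ge0; apply: sumr_ge0 => k _; first exact: normr_ge0.
by apply: sumr_ge0 => l _; exact: normr_ge0.
Qed.
End MC.

From Stdlib Require Import Reals Lra Lia List Ranalysis1 Ranalysis4 MVT ClassicalDescription.
Import ListNotations.
Open Scope R_scope.

Lemma sumV_0 f : sumV 0 f = 0.
Proof. reflexivity. Qed.



Lemma fold_init (f : nat -> R) l a :
  fold_right (fun i acc => f i + acc) a l = fold_right (fun i acc => f i + acc) 0 l + a.
Proof. induction l as [|x l IH]; simpl; [lra|]. rewrite IH; lra. Qed.

Lemma sumV_S n f : sumV (S n) f = sumV n f + f n.
Proof.
  unfold sumV. rewrite seq_S, fold_right_app. simpl.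
  rewrite fold_init. lra.
Qed.

Lemma abs_le_inv x a : Rabs x <= a -> - a <= x <= a.
Proof. unfold Rabs. destruct (Rcase_abs x); lra. Qed.

Lemma sq_abs x : x * x = Rabs x * Rabs x.
Proof. rewrite <- Rabs_mult. symmetry. apply Rabs_right. nra. Qed.

Lemma sumV_ext n f g : (forall j, (j < n)%nat -> f j = g j) -> sumV n f = sumV n g.
Proof.
  induction n as [|n IH]; intros H; [reflexivity|].
  rewrite !sumV_S, IH, H; [reflexivity|lia|intros; apply H; lia].
Qed.

Lemma sumV_plus n f g : sumV n (fun j => f j + g j) = sumV n f + sumV n g.
Proof. induction n as [|n IH]; [unfold sumV; simpl; lra|]. rewrite !sumV_S, IH; cbv beta; lra. Qed.

Lemma sumV_minus n f g : sumV n (fun j => f j - g j) = sumV n f - sumV n g.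
Proof. induction n as [|n IH]; [unfold sumV; simpl; lra|]. rewrite !sumV_S, IH; cbv beta; lra. Qed.

Lemma sumV_scal n c f : sumV n (fun j => c * f j) = c * sumV n f.
Proof. induction n as [|n IH]; [unfold sumV; simpl; lra|]. rewrite !sumV_S, IH; cbv beta; lra. Qed.

Lemma sumV_opp n f : sumV n (fun j => - f j) = - sumV n f.
Proof. induction n as [|n IH]; [unfold sumV; simpl; lra|]. rewrite !sumV_S, IH; cbv beta; lra. Qed.

Lemma sumV_const0 n : sumV n (fun _ => 0) = 0.
Proof. induction n as [|n IH]; [unfold sumV; simpl; lra|]. rewrite !sumV_S, IH; cbv beta; lra. Qed.

Lemma sumV_le n f g : (forall j, (j < n)%nat -> f j <= g j) -> sumV n f <= sumV n g.
Proof.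
  induction n as [|n IH]; intros H; [unfold sumV; simpl; lra|].
  rewrite !sumV_S. assert (f n <= g n) by (apply H; lia).
  assert (sumV n f <= sumV n g) by (apply IH; intros; apply H; lia). lra.
Qed.

Lemma sumV_nonneg n f : (forall j, (j < n)%nat -> 0 <= f j) -> 0 <= sumV n f.
Proof.
  intros H. rewrite <- (sumV_const0 n). apply sumV_le. auto.
Qed.

Lemma sumV_term n f i : (forall j, (j < n)%nat -> 0 <= f j) -> (i < n)%nat -> f i <= sumV n f.
Proof.
  induction n as [|n IH]; intros H Hi; [lia|].
  rewrite sumV_S. assert (0 <= sumV n f) by (apply sumV_nonneg; intros; apply H; lia).
  destruct (Nat.eq_dec i n) as [->|Hne].
  - lra.
  - assert (f i <= sumV n f) by (apply IH; [intros; apply H; lia | lia]).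
    assert (0 <= f n) by (apply H; lia). lra.
Qed.

Lemma sumV_zero_nonneg n f : (forall j, (j < n)%nat -> 0 <= f j) -> sumV n f = 0 ->
  forall i, (i < n)%nat -> f i = 0.
Proof.
  intros H Hs i Hi. pose proof (sumV_term n f i H Hi). pose proof (H i Hi). lra.
Qed.

Lemma sumV_swap n m (F : nat -> nat -> R) :
  sumV n (fun j => sumV m (fun k => F j k)) = sumV m (fun k => sumV n (fun j => F j k)).
Proof.
  induction n as [|n IH].
  - simpl. symmetry. apply sumV_const0.
  - rewrite sumV_S, IH, <- sumV_plus. apply sumV_ext. intros. rewrite sumV_S. reflexivity.
Qed.

Lemma sumV_delta n (f : nat -> R) i : (i < n)%nat ->
  sumV n (fun j => (if Nat.eq_dec i j then 1 else 0) * f j) = f i.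
Proof.
  induction n as [|n IH]; intros Hi; [lia|].
  rewrite sumV_S. destruct (Nat.eq_dec i n) as [->|Hne].
  - rewrite (sumV_ext n _ (fun _ => 0)), sumV_const0.
    + destruct (Nat.eq_dec n n); [lra|congruence].
    + intros j Hj. destruct (Nat.eq_dec n j); [lia|lra].
  - rewrite IH by lia. destruct (Nat.eq_dec i n); [congruence|lra].
Qed.

Lemma sumV_antisym n (F : nat -> nat -> R) :
  (forall j k, (j < n)%nat -> (k < n)%nat -> F j k = - F k j) ->
  sumV n (fun j => sumV n (fun k => F j k)) = 0.
Proof.
  intros H.
  assert (E : sumV n (fun j => sumV n (fun k => F j k)) =
              - sumV n (fun j => sumV n (fun k => F j k))).
  { rewrite sumV_swap at 1. rewrite <- sumV_opp. apply sumV_ext. intros k Hk.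
    rewrite <- sumV_opp. apply sumV_ext. intros j Hj. cbv beta. rewrite (H j k) by auto. lra. }
  lra.
Qed.

Lemma sumV_abs n f : Rabs (sumV n f) <= sumV n (fun j => Rabs (f j)).
Proof.
  induction n as [|n IH]; [unfold sumV; simpl; rewrite Rabs_R0; lra|].
  rewrite !sumV_S. eapply Rle_trans; [apply Rabs_triang|]. lra.
Qed.

Lemma sumV_abs_sq n f : (sumV n (fun j => Rabs (f j)))^2 <= INR n * sumV n (fun j => f j ^ 2).
Proof.
  induction n as [|n IH]; [unfold sumV; simpl; lra|].
  rewrite !sumV_S, S_INR. cbv beta.
  set (S := sumV n (fun j => Rabs (f j))) in *.
  set (Q := sumV n (fun j => f j ^ 2)) in *.
  assert (Ha : f n ^ 2 = Rabs (f n) ^ 2) by (rewrite pow2_abs; reflexivity).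
  rewrite Ha. set (a := Rabs (f n)).
  assert (a0 : 0 <= a) by apply Rabs_pos.
  assert (Q0 : 0 <= Q) by (apply sumV_nonneg; intros; apply pow2_ge_0).
  assert (S0 : 0 <= S) by (apply sumV_nonneg; intros; apply Rabs_pos).
  assert (n0 : 0 <= INR n) by apply pos_INR.
  assert (K : 2 * S * a <= Q + INR n * a ^ 2).
  { destruct (Req_dec (INR n) 0) as [E|E].
    - rewrite E in IH. assert (S = 0) by nra. subst. nra.
    - assert (P : 0 < INR n) by lra.
      assert (H2 : INR n * (2 * S * a) <= INR n * (Q + INR n * a ^ 2)).
      { assert (0 <= (S - INR n * a) ^ 2) by apply pow2_ge_0. nra. }
      apply Rmult_le_reg_l in H2; auto. }
  nra.
Qed.

Lemma maxabs_ge n f i : (i < n)%nat -> Rabs (f i) <= maxabs n f.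
Proof.
  unfold maxabs. intros Hi. assert (In i (seq 0 n)) by (apply in_seq; lia).
  induction (seq 0 n) as [|x l IH]; [contradiction|].
  simpl. destruct H as [->|H].
  - apply Rmax_l.
  - eapply Rle_trans; [apply IH; auto|apply Rmax_r].
Qed.

Lemma maxabs_le n f B : 0 <= B -> (forall i, (i < n)%nat -> Rabs (f i) <= B) -> maxabs n f <= B.
Proof.
  unfold maxabs. intros HB H.
  assert (H' : forall i, In i (seq 0 n) -> Rabs (f i) <= B) by (intros i Hi; apply H; apply in_seq in Hi; lia).
  clear H. induction (seq 0 n) as [|x l IH]; simpl; [lra|].
  apply Rmax_lub; [apply H'; left; auto|apply IH; intros; apply H'; right; auto].
Qed.

Lemma sumV_const n c : sumV n (fun _ => c) = INR n * c.
Proof. induction n as [|n IH]; [unfold sumV; simpl; lra|]. rewrite sumV_S, IH, S_INR. ring. Qed.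

Lemma dmin_le n w i : (i < n)%nat -> dmin n w <= deg n w i.
Proof.
  unfold dmin. intros Hi. assert (In i (seq 0 n)) by (apply in_seq; lia).
  induction (seq 0 n) as [|x l IH]; [contradiction|].
  simpl. destruct H as [->|H].
  - apply Rmin_l.
  - eapply Rle_trans; [apply Rmin_r|apply IH; auto].
Qed.

Lemma dmin_pos n w : (0 < n)%nat -> (forall i, (i < n)%nat -> 0 < deg n w i) -> 0 < dmin n w.
Proof.
  unfold dmin. intros Hn H.
  assert (H0 : 0 < deg n w 0) by auto.
  assert (H' : forall i, In i (seq 0 n) -> 0 < deg n w i) by (intros i Hi; apply H; apply in_seq in Hi; lia).
  clear H. induction (seq 0 n) as [|x l IH]; simpl; [lra|].
  apply Rmin_glb_lt; [apply H'; left; auto|apply IH; intros; apply H'; right; auto].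
Qed.

Lemma deriv_sumV n (F : nat -> R -> R) (l : nat -> R) t :
  (forall j, (j < n)%nat -> derivable_pt_lim (F j) t (l j)) ->
  derivable_pt_lim (fun s => sumV n (fun j => F j s)) t (sumV n l).
Proof.
  induction n as [|n IH]; intros H.
  - unfold sumV; simpl. apply derivable_pt_lim_const.
  - rewrite sumV_S.
    apply (derivable_pt_lim_ext (fun s => sumV n (fun j => F j s) + F n s)).
    + intros s. rewrite sumV_S. reflexivity.
    + apply derivable_pt_lim_plus; [apply IH; intros; apply H; lia|apply H; lia].
Qed.

Lemma deriv_local f g x l (d : R) : 0 < d ->
  (forall y, Rabs (y - x) < d -> f y = g y) ->
  derivable_pt_lim g x l -> derivable_pt_lim f x l.
Proof.
  intros Hd Hfg Hg eps Heps. destruct (Hg eps Heps) as [e He].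
  assert (Hm : 0 < Rmin e d) by (apply Rmin_glb_lt; [apply cond_pos|lra]).
  exists (mkposreal _ Hm). intros h h0 hlt. simpl in hlt.
  rewrite (Hfg (x + h)), (Hfg x).
  - apply He; auto. eapply Rlt_le_trans; [apply hlt|apply Rmin_l].
  - rewrite Rminus_diag, Rabs_R0; lra.
  - replace (x + h - x) with h by ring. eapply Rlt_le_trans; [apply hlt|apply Rmin_r].
Qed.

Definition Pq (x : R) := Rmax x 0 * Rmax x 0.

Lemma Pq_bound x h : Rabs (Pq (x + h) - Pq x - 2 * Rmax x 0 * h) <= h * h.
Proof.
  unfold Pq, Rmax. apply Rabs_le.
  destruct (Rle_dec (x + h) 0); destruct (Rle_dec x 0); split; nra.
Qed.

Lemma Pq_deriv x : derivable_pt_lim Pq x (2 * Rmax x 0).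
Proof.
  intros eps Heps. exists (mkposreal _ Heps). intros h h0 hlt. simpl in hlt.
  pose proof (Pq_bound x h) as B.
  replace ((Pq (x + h) - Pq x) / h - 2 * Rmax x 0) with ((Pq (x + h) - Pq x - 2 * Rmax x 0 * h) / h)
    by (field; auto).
  unfold Rdiv. rewrite Rabs_mult, Rabs_inv.
  assert (0 < Rabs h) by (apply Rabs_pos_lt; auto).
  apply (Rmult_lt_reg_r (Rabs h)); auto.
  rewrite Rmult_assoc, Rinv_l by lra.
  assert (h * h = Rabs h * Rabs h) by (rewrite <- Rabs_mult, Rabs_right; nra).
  nra.
Qed.

Lemma Pq_nonneg x : 0 <= Pq x.
Proof. unfold Pq. nra. Qed.

Lemma Pq_zero x : Pq x = 0 -> x <= 0.
Proof. unfold Pq, Rmax. destruct (Rle_dec x 0); nra. Qed.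

Lemma Pq_nonpos x : x <= 0 -> Pq x = 0.
Proof. unfold Pq, Rmax. destruct (Rle_dec x 0); intros; nra. Qed.

Lemma Rmax_mono_prod a b : 0 <= (a - b) * (Rmax a 0 - Rmax b 0).
Proof.
  unfold Rmax. destruct (Rle_dec a 0); destruct (Rle_dec b 0).
- lra.
- replace ((a - b) * (0 - b)) with ((b-a)*b) by ring. apply Rmult_le_pos; lra.
- replace ((a - b) * (a - 0)) with ((a-b)*a) by ring. apply Rmult_le_pos; lra.
- replace ((a - b) * (a - b)) with ((a-b)^2) by ring. apply pow2_ge_0.
Qed.

Section Graph.
Variable n : nat.
Variable w : nat -> nat -> R.
Variable r : R.
Hypothesis Hw : weighted_graph n w.
Hypothesis Hr : 0 <= r <= 1.

Definition dr j := Rpower (deg n w j) r.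
Definition cr j := Rpower (deg n w j) (- r).

Lemma w_sym j k : (j < n)%nat -> (k < n)%nat -> w j k = w k j.
Proof. destruct Hw as [H _]. auto. Qed.
Lemma w_nonneg j k : (j < n)%nat -> (k < n)%nat -> 0 <= w j k.
Proof. destruct Hw as [_ [H _]]. auto. Qed.
Lemma deg_pos j : (j < n)%nat -> 0 < deg n w j.
Proof. destruct Hw as [_ [_ [_ H]]]. auto. Qed.

Lemma dr_pos j : 0 < dr j.
Proof. unfold dr, Rpower. apply exp_pos. Qed.
Lemma cr_pos j : 0 < cr j.
Proof. unfold cr, Rpower. apply exp_pos. Qed.
Lemma dr_cr j : (j < n)%nat -> dr j * cr j = 1.
Proof.
  intros Hj. unfold dr, cr. rewrite <- Rpower_plus. replace (r + - r) with 0 by ring.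
  apply Rpower_O. apply deg_pos; auto.
Qed.

Lemma Lap_dr f i : (i < n)%nat -> dr i * Lap n w r f i = sumV n (fun j => w i j * (f i - f j)).
Proof. intros Hi. unfold Lap. fold (cr i). rewrite <- Rmult_assoc, dr_cr by auto. ring. Qed.

Lemma Lap_ext f g i : (forall j, (j < n)%nat -> f j = g j) -> (i < n)%nat -> Lap n w r f i = Lap n w r g i.
Proof.
  intros H Hi. unfold Lap. f_equal. apply sumV_ext. intros j Hj. rewrite !H by auto. reflexivity.
Qed.

Lemma Lap_lin a b f g i : Lap n w r (fun j => a * f j + b * g j) i = a * Lap n w r f i + b * Lap n w r g i.
Proof.
  unfold Lap. rewrite (sumV_ext n _ (fun j => a * (w i j * (f i - f j)) + b * (w i j * (g i - g j)))).
  - rewrite sumV_plus, !sumV_scal. ring.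
  - intros; ring.
Qed.

Lemma Lap_opp f i : Lap n w r (fun j => - f j) i = - Lap n w r f i.
Proof.
  unfold Lap. rewrite Ropp_mult_distr_r, <- sumV_opp. f_equal. apply sumV_ext. intros; ring.
Qed.

Definition ip f g := sumV n (fun j => dr j * f j * g j).

Lemma dsum f g :
  2 * sumV n (fun j => sumV n (fun k => w j k * (f j - f k) * g j)) =
  sumV n (fun j => sumV n (fun k => w j k * (f j - f k) * (g j - g k))).
Proof.
  set (X := sumV n (fun j => sumV n (fun k => w j k * (f j - f k) * g j))).
  assert (HY : sumV n (fun j => sumV n (fun k => w j k * (f j - f k) * g k)) = - X).
  { rewrite sumV_swap. unfold X. rewrite <- sumV_opp. apply sumV_ext. intros k Hk.
    rewrite <- sumV_opp. apply sumV_ext. intros j Hj. rewrite w_sym by auto. ring. }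
  rewrite (sumV_ext n _ (fun j => sumV n (fun k => w j k * (f j - f k) * g j) -
                                   sumV n (fun k => w j k * (f j - f k) * g k))).
  - rewrite sumV_minus, HY. unfold X. ring.
  - intros j Hj. rewrite <- sumV_minus. apply sumV_ext. intros; ring.
Qed.

Lemma ip_Lap f g : ip (Lap n w r f) g = sumV n (fun j => sumV n (fun k => w j k * (f j - f k) * g j)).
Proof.
  unfold ip. apply sumV_ext. intros j Hj. rewrite Lap_dr by auto.
  rewrite Rmult_comm, <- sumV_scal. apply sumV_ext. intros; ring.
Qed.

Lemma ip_Lap_sym f g : ip (Lap n w r f) g = ip (Lap n w r g) f.
Proof.
  rewrite !ip_Lap. apply (Rmult_eq_reg_l 2); [|lra]. rewrite !dsum.
  apply sumV_ext. intros j Hj. apply sumV_ext. intros k Hk. ring.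
Qed.


Lemma deriv_Pq_comp g t l K : derivable_pt_lim g t l ->
  derivable_pt_lim (fun s => Pq (g s - K)) t (2 * Rmax (g t - K) 0 * l).
Proof.
  intros H.
  assert (H1 : derivable_pt_lim (fun s => g s - K) t (l - 0)).
  { apply derivable_pt_lim_minus; [auto|apply derivable_pt_lim_const]. }
  replace l with (l - 0) by ring.
  apply (derivable_pt_lim_ext (comp Pq (fun s => g s - K))); [reflexivity|].
  apply derivable_pt_lim_comp; auto. apply Pq_deriv.
Qed.

Lemma max_principle (y : R -> nat -> R) K :
  (forall t j, (j < n)%nat -> derivable_pt_lim (fun s => y s j) t (- Lap n w r (y t) j)) ->
  (forall j, (j < n)%nat -> y 0 j <= K) ->
  forall t j, 0 <= t -> (j < n)%nat -> y t j <= K.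
Proof.
  intros Hd H0 t j Ht Hj.
  set (phi := fun s => sumV n (fun j => dr j * Pq (y s j - K))).
  set (phi' := fun s => sumV n (fun j => dr j * (2 * Rmax (y s j - K) 0 * - Lap n w r (y s) j))).
  assert (Dphi : forall s, derivable_pt_lim phi s (phi' s)).
  { intros s. unfold phi, phi'. apply (deriv_sumV n (fun j s => dr j * Pq (y s j - K))).
    intros k Hk. apply (derivable_pt_lim_ext (mult_real_fct (dr k) (fun s => Pq (y s k - K)))); [reflexivity|].
    apply derivable_pt_lim_scal. apply deriv_Pq_comp. auto. }
  assert (Nphi' : forall s, phi' s <= 0).
  { intros s. unfold phi'.
    set (p := fun j => Rmax (y s j - K) 0).
    rewrite (sumV_ext n _ (fun j => - 2 * (sumV n (fun k => w j k * (y s j - y s k) * p j)))).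
    - rewrite sumV_scal.
      assert (0 <= 2 * sumV n (fun j => sumV n (fun k => w j k * (y s j - y s k) * p j))).
      { rewrite (dsum (y s) p). apply sumV_nonneg. intros a Ha. apply sumV_nonneg. intros b Hb.
        rewrite Rmult_assoc. apply Rmult_le_pos; [apply w_nonneg; auto|].
        unfold p. pose proof (Rmax_mono_prod (y s a - K) (y s b - K)).
        replace (y s a - K - (y s b - K)) with (y s a - y s b) in H by ring. auto. }
      lra.
    - intros a Ha. replace (dr a * (2 * Rmax (y s a - K) 0 * - Lap n w r (y s) a))
        with (- 2 * (p a * (dr a * Lap n w r (y s) a))) by (unfold p; ring).
      rewrite Lap_dr by auto. rewrite <- sumV_scal. f_equal. apply sumV_ext. intros; ring. }
  assert (phi0 : phi 0 = 0).
  { unfold phi. transitivity (sumV n (fun _ => 0)); [|apply sumV_const0]. apply sumV_ext. intros k Hk.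
    cbv beta. pose proof (H0 k Hk). rewrite Pq_nonpos by lra. ring. }
  assert (phit : phi t <= 0).
  { destruct (Req_dec t 0) as [->|Htn]; [lra|].
    destruct (MVT_cor2 phi phi' 0 t) as [c [Hc _]]; [lra|intros; apply Dphi|].
    pose proof (Nphi' c). nra. }
  assert (Hz : phi t = 0).
  { assert (0 <= phi t). { unfold phi. apply sumV_nonneg. intros k _.
      apply Rmult_le_pos; [left; apply dr_pos|apply Pq_nonneg]. }
    lra. }
  pose proof (sumV_zero_nonneg n _ (fun k _ => Rmult_le_pos _ _ (Rlt_le _ _ (dr_pos k)) (Pq_nonneg (y t k - K))) Hz j Hj) as E.
  cbv beta in E. apply Rmult_integral in E. destruct E as [E|E].
  - pose proof (dr_pos j). lra.
  - apply Pq_zero in E. lra.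
Qed.


Section Heat.
Variable S : nat -> bool.
Variable u : R -> nat -> R.
Hypothesis Hu : heat_solution n w r (chi S) u.

Definition hh s j := Lap n w r (u s) j.
Definition kap := maxabs n (Lap n w r (chi S)).

Lemma u_deriv t j : (j < n)%nat -> derivable_pt_lim (fun s => u s j) t (- hh t j).
Proof. destruct Hu as [_ H]. intros; apply H; auto. Qed.

Lemma hh_deriv t j : (j < n)%nat -> derivable_pt_lim (fun s => hh s j) t (- Lap n w r (hh t) j).
Proof.
  intros Hj. unfold hh at 1, Lap at 1.
  replace (- Lap n w r (hh t) j) with
      (cr j * sumV n (fun k => w j k * (- hh t j - - hh t k))).
  - apply (derivable_pt_lim_ext (mult_real_fct (cr j) (fun s => sumV n (fun k => w j k * (u s j - u s k))))); [reflexivity|].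
    apply derivable_pt_lim_scal.
    apply (deriv_sumV n (fun k s => w j k * (u s j - u s k))). intros k Hk.
    apply (derivable_pt_lim_ext (mult_real_fct (w j k) (fun s => u s j - u s k))); [reflexivity|].
    apply derivable_pt_lim_scal. apply derivable_pt_lim_minus; apply u_deriv; auto.
  - unfold Lap, cr. rewrite Ropp_mult_distr_r, <- sumV_opp. f_equal.
    apply sumV_ext. intros; ring.
Qed.

Lemma hh0 j : (j < n)%nat -> hh 0 j = Lap n w r (chi S) j.
Proof. intros Hj. unfold hh. apply Lap_ext; auto. destruct Hu as [H _]. auto. Qed.

Lemma hh_bound t j : 0 <= t -> (j < n)%nat -> Rabs (hh t j) <= kap.
Proof.
  intros Ht Hj. apply Rabs_le. split.
  - assert (- hh t j <= kap); [|lra].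
    apply (max_principle (fun s k => - hh s k) kap); auto.
    + intros t' k Hk. apply (derivable_pt_lim_ext (fun s => - hh s k)); [reflexivity|].
      rewrite Lap_opp, Ropp_involutive.
      replace (Lap n w r (hh t') k) with (- - Lap n w r (hh t') k) by ring.
      apply derivable_pt_lim_opp. apply hh_deriv; auto.
    + intros k Hk. rewrite hh0 by auto. pose proof (maxabs_ge n (Lap n w r (chi S)) k Hk).
      fold kap in H. apply abs_le_inv in H. lra.
  - apply (max_principle hh kap); auto.
    + intros; apply hh_deriv; auto.
    + intros k Hk. rewrite hh0 by auto. pose proof (maxabs_ge n (Lap n w r (chi S)) k Hk).
      fold kap in H. apply abs_le_inv in H. lra.
Qed.

Lemma u_incr a b i : 0 <= a <= b -> (i < n)%nat -> Rabs (u b i - u a i) <= kap * (b - a).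
Proof.
  intros Hab Hi. destruct (Req_dec a b) as [->|Hne].
  - rewrite Rminus_diag, Rabs_R0. lra.
  - destruct (MVT_cor2 (fun s => u s i) (fun s => - hh s i) a b) as [c [Hc Hc2]]; [lra| |].
    + intros c _. apply u_deriv; auto.
    + rewrite Hc, Rabs_mult, Rabs_Ropp, (Rabs_right (b - a)) by lra.
      apply Rmult_le_compat_r; [lra|]. apply hh_bound; auto. lra.
Qed.

Lemma u_bound t i : 0 <= t -> (i < n)%nat -> Rabs (u t i - chi S i) <= kap * t.
Proof.
  intros Ht Hi. destruct Hu as [H0 _]. rewrite <- (H0 i Hi).
  replace t with (t - 0) at 2 by ring. apply u_incr; auto. lra.
Qed.


Lemma deriv_lin_const c s : derivable_pt_lim (fun x => c * x) s c.
Proof.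
  pose proof (derivable_pt_lim_scal id c s 1 (derivable_pt_lim_id s)) as H.
  rewrite Rmult_1_r in H.
  apply (derivable_pt_lim_ext (mult_real_fct c id)); [reflexivity|auto].
Qed.

Lemma strict tau i : 0 < tau -> kap * tau <= 1/2 -> 0 < kap -> (i < n)%nat ->
  S i = false -> u tau i >= 1/2 -> False.
Proof.
  intros Htau Hkt Hk0 Hi HS Hu12.
  assert (U0 : u 0 i = 0).
  { destruct Hu as [H0 _]. rewrite H0 by auto. unfold chi. rewrite HS. reflexivity. }
  assert (Ulin : forall s, 0 <= s <= tau -> u s i = kap * s).
  { intros s Hs. pose proof (u_incr 0 s i) as A1. pose proof (u_incr s tau i) as A2.
    assert (B1 : Rabs (u s i - u 0 i) <= kap * (s - 0)) by (apply A1; [lra|auto]).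
    assert (B2 : Rabs (u tau i - u s i) <= kap * (tau - s)) by (apply A2; [lra|auto]).
    apply abs_le_inv in B1. apply abs_le_inv in B2. nra. }
  assert (Hmin : forall s j, 0 <= s -> (j < n)%nat -> - kap <= hh s j).
  { intros s j Hs Hj. pose proof (hh_bound s j Hs Hj) as B. apply abs_le_inv in B. lra. }
  assert (Hloc : forall (f : R -> R) c s l, 0 < s < tau -> (forall x, 0 < x < tau -> f x = c) ->
             derivable_pt_lim f s l -> l = 0).
  { intros f c s l Hs Hf Hd.
    assert (Hd' : derivable_pt_lim f s 0).
    { apply (deriv_local f (fun _ => c) s 0 (Rmin s (tau - s))).
      - apply Rmin_glb_lt; lra.
      - intros y Hy. apply Hf.
        pose proof (Rmin_l s (tau - s)). pose proof (Rmin_r s (tau - s)).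
        apply Rabs_def2 in Hy. lra.
      - apply derivable_pt_lim_const. }
    eapply uniqueness_limite; eauto. }
  set (C := fun j => (j < n)%nat /\ forall s, 0 < s < tau -> hh s j = - kap).
  assert (Ci : C i).
  { split; auto. intros s Hs.
    assert (E : - hh s i - kap = 0).
    { apply (Hloc (fun x => u x i - kap * x) 0 s); auto.
      - intros x Hx. rewrite Ulin by lra. ring.
      - apply derivable_pt_lim_minus; [apply u_deriv; auto|apply deriv_lin_const]. }
    lra. }
  assert (Cclos : forall j k, C j -> (k < n)%nat -> w j k <> 0 -> C k).
  { intros j k [Hj Cj] Hk Hw0. split; auto. intros s Hs.
    assert (E : - Lap n w r (hh s) j = 0).
    { apply (Hloc (fun x => hh x j) (- kap) s); auto. apply hh_deriv; auto. }
    assert (E2 : sumV n (fun k' => - (w j k' * (hh s j - hh s k'))) = 0).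
    { rewrite sumV_opp, <- Lap_dr by auto. nra. }
    assert (Hnn : forall k', (k' < n)%nat -> 0 <= - (w j k' * (hh s j - hh s k'))).
    { intros k' Hk'. rewrite (Cj s Hs). pose proof (Hmin s k' ltac:(lra) Hk').
      pose proof (w_nonneg j k' Hj Hk'). nra. }
    pose proof (sumV_zero_nonneg n _ Hnn E2 k Hk) as Z. cbv beta in Z.
    rewrite (Cj s Hs) in Z.
    assert (Z2 : w j k * (- kap - hh s k) = 0) by lra.
    apply Rmult_integral in Z2. destruct Z2 as [Z2|Z2]; [contradiction|lra]. }
  set (s0 := tau / 2).
  assert (Hs0 : 0 < s0 < tau) by (unfold s0; lra).
  set (c := fun j => if ClassicalDescription.excluded_middle_informative (C j) then 1 else 0).
  set (Q := sumV n (fun j => c j * (dr j * hh s0 j))).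
  assert (Q0 : Q = 0).
  { unfold Q. rewrite <- (sumV_antisym n (fun j k => c j * c k * (w j k * (u s0 j - u s0 k)))).
    - apply sumV_ext. intros j Hj. unfold hh. rewrite Lap_dr by auto.
      rewrite <- sumV_scal. apply sumV_ext. intros k Hk.
      unfold c. destruct (ClassicalDescription.excluded_middle_informative (C j)) as [Cj|Cj];
        [|ring].
      destruct (Req_dec (w j k) 0) as [W|W]; [rewrite W; ring|].
      destruct (ClassicalDescription.excluded_middle_informative (C k)) as [Ck|Ck]; [ring|].
      exfalso. apply Ck. eapply Cclos; eauto.
    - intros j k Hj Hk. rewrite (w_sym j k) by auto. ring. }
  assert (Qneg : Q <= - kap * dr i).
  { unfold Q. rewrite (sumV_ext n _ (fun j => - kap * (c j * dr j))).
    - rewrite sumV_scal. apply Rmult_le_compat_neg_l; [lra|].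
      replace (dr i) with (c i * dr i).
      + apply (sumV_term n (fun j => c j * dr j)); auto.
        intros j _. unfold c. destruct (ClassicalDescription.excluded_middle_informative (C j));
          pose proof (dr_pos j); lra.
      + unfold c. destruct (ClassicalDescription.excluded_middle_informative (C i)); [ring|contradiction].
    - intros j Hj. unfold c. destruct (ClassicalDescription.excluded_middle_informative (C j)) as [[_ Cj]|Cj];
        [rewrite (Cj s0 Hs0)|]; ring. }
  pose proof (dr_pos i). nra.
Qed.

End Heat.

Section Spec.

Definition NN f := ip f f.
Definition Zc := sumV n (fun j => / dr j).

Lemma NN_nonneg f : 0 <= NN f.
Proof.
  unfold NN, ip. apply sumV_nonneg. intros j _. pose proof (dr_pos j).
  rewrite Rmult_assoc. apply Rmult_le_pos; [lra|]. apply Rle_0_sqr.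
Qed.

Lemma NN_term f j : (j < n)%nat -> dr j * f j * f j <= NN f.
Proof.
  intros Hj. unfold NN, ip. apply (sumV_term n (fun j => dr j * f j * f j)); auto.
  intros k _. pose proof (dr_pos k). rewrite Rmult_assoc. apply Rmult_le_pos; [lra|]. apply Rle_0_sqr.
Qed.

Lemma NN_zero f : NN f = 0 -> forall j, (j < n)%nat -> f j = 0.
Proof.
  intros H j Hj. pose proof (NN_term f j Hj). pose proof (dr_pos j).
  assert (dr j * (f j * f j) = 0).
  { pose proof (Rle_0_sqr (f j)). unfold Rsqr in *. nra. }
  apply Rmult_integral in H2. destruct H2; [lra|]. apply Rmult_integral in H2. tauto.
Qed.

Lemma NN_scal c f : NN (fun j => c * f j) = c * c * NN f.
Proof. unfold NN, ip. rewrite <- sumV_scal. apply sumV_ext. intros; ring. Qed.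

Lemma Lap_scal c f i : Lap n w r (fun j => c * f j) i = c * Lap n w r f i.
Proof.
  unfold Lap. rewrite (sumV_ext n _ (fun j => c * (w i j * (f i - f j)))) by (intros; ring).
  rewrite sumV_scal. ring.
Qed.

Lemma Zc_ge j : (j < n)%nat -> / dr j <= Zc.
Proof.
  intros Hj. unfold Zc. apply (sumV_term n (fun j => / dr j)); auto.
  intros k _. left. apply Rinv_0_lt_compat, dr_pos.
Qed.

Lemma sq_le_Zc f j : (j < n)%nat -> f j * f j <= Zc * NN f.
Proof.
  intros Hj. pose proof (NN_term f j Hj). pose proof (Zc_ge j Hj). pose proof (dr_pos j).
  pose proof (NN_nonneg f).
  replace (f j * f j) with (/ dr j * (dr j * f j * f j)) by (field; lra).
  apply Rle_trans with (/ dr j * NN f).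
  - apply Rmult_le_compat_l; [left; apply Rinv_0_lt_compat; lra|lra].
  - apply Rmult_le_compat_r; lra.
Qed.

Lemma sum_sq_le y : sumV n (fun j => y j ^ 2) <= INR n * Zc * NN y.
Proof.
  rewrite Rmult_assoc, <- sumV_const. apply sumV_le. intros j Hj.
  pose proof (sq_le_Zc y j Hj). simpl. lra.
Qed.

Lemma NN_Lap_bounded : exists M, forall f, NN f = 1 -> NN (Lap n w r f) <= M.
Proof.
  set (b := fun i => cr i * (2 * (1 + Zc) * deg n w i)).
  exists (sumV n (fun i => dr i * b i * b i)). intros f Hf.
  assert (Z0 : 0 <= Zc) by (unfold Zc; apply sumV_nonneg; intros; left; apply Rinv_0_lt_compat, dr_pos).
  assert (Fb : forall j, (j < n)%nat -> Rabs (f j) <= 1 + Zc).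
  { intros j Hj. pose proof (sq_le_Zc f j Hj). rewrite Hf in H.
    pose proof (Rabs_pos (f j)). assert (Rabs (f j) * Rabs (f j) = f j * f j) by (rewrite <- Rabs_mult; apply Rabs_right; nra).
    nra. }
  unfold NN, ip. apply sumV_le. intros i Hi.
  assert (B : Rabs (Lap n w r f i) <= b i).
  { unfold Lap, b. fold (cr i). rewrite Rabs_mult, (Rabs_right (cr i)) by (left; apply cr_pos).
    apply Rmult_le_compat_l; [left; apply cr_pos|].
    eapply Rle_trans; [apply sumV_abs|]. unfold deg. rewrite <- sumV_scal. apply sumV_le.
    intros j Hj. rewrite Rabs_mult, Rabs_right by (apply Rle_ge, w_nonneg; auto).
    pose proof (w_nonneg i j Hi Hj). pose proof (Fb i Hi). pose proof (Fb j Hj).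
    assert (T : Rabs (f i - f j) <= Rabs (f i) + Rabs (f j))
      by (unfold Rminus; rewrite <- (Rabs_Ropp (f j)); apply Rabs_triang).
    assert (T2 : Rabs (f i - f j) <= 2 * (1 + Zc)) by lra.
    apply Rmult_le_compat_l with (r := w i j) in T2; auto. lra. }
  pose proof (Rabs_pos (Lap n w r f i)).
  assert (Rabs (Lap n w r f i) * Rabs (Lap n w r f i) = Lap n w r f i * Lap n w r f i)
    by (rewrite <- Rabs_mult; apply Rabs_right; nra).
  pose proof (dr_pos i). rewrite !Rmult_assoc. apply Rmult_le_compat_l; [lra|]. nra.
Qed.

Definition del (i j : nat) : R := if Nat.eq_dec i j then 1 else 0.
Definition Lm i j := cr i * (del i j * deg n w i - w i j).
Definition L2 i k := sumV n (fun j => Lm i j * Lm j k).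

Lemma Lap_matrix f i : (i < n)%nat -> Lap n w r f i = sumV n (fun j => Lm i j * f j).
Proof.
  intros Hi. unfold Lm.
  rewrite (sumV_ext n _ (fun j => cr i * (del i j * (deg n w i * f j)) - cr i * (w i j * f j)))
    by (intros; ring).
  rewrite sumV_minus, !sumV_scal. unfold del. rewrite sumV_delta by auto.
  unfold Lap. fold (cr i).
  rewrite (sumV_ext n _ (fun j => f i * w i j - w i j * f j)) by (intros; ring).
  rewrite sumV_minus, sumV_scal. unfold deg. change (sumV n (w i)) with (sumV n (fun j => w i j)). ring.
Qed.

Lemma LL_matrix f i : (i < n)%nat -> Lap n w r (Lap n w r f) i = sumV n (fun k => L2 i k * f k).
Proof.
  intros Hi. rewrite Lap_matrix by auto.
  rewrite (sumV_ext n _ (fun j => sumV n (fun k => Lm i j * Lm j k * f k))).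
  - rewrite sumV_swap. apply sumV_ext. intros k Hk. unfold L2.
    rewrite Rmult_comm, <- sumV_scal. apply sumV_ext. intros; ring.
  - intros j Hj. rewrite Lap_matrix by auto. rewrite <- sumV_scal. apply sumV_ext. intros; ring.
Qed.

Lemma NN_ext f g : (forall j, (j < n)%nat -> f j = g j) -> NN f = NN g.
Proof. intros H. unfold NN, ip. apply sumV_ext. intros j Hj. rewrite H by auto. reflexivity. Qed.

Lemma ip_comm f g : ip f g = ip g f.
Proof. unfold ip. apply sumV_ext. intros; ring. Qed.

Lemma NN_sub a f g : NN (fun j => a * f j - g j) = a * a * NN f - 2 * a * ip f g + NN g.
Proof.
  unfold NN, ip.
  rewrite <- sumV_scal, <- (sumV_scal n (2 * a)), <- sumV_minus, <- sumV_plus.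
  apply sumV_ext. intros; ring.
Qed.

Lemma sqrt_sq_le a b : 0 <= a -> 0 <= b -> sqrt a <= b -> a <= b * b.
Proof.
  intros Ha Hb H. rewrite <- (sqrt_sqrt a) by auto. apply Rmult_le_compat; auto; apply sqrt_pos.
Qed.

Lemma spec_bound rho : (0 < n)%nat -> is_spectral_radius n w r rho ->
  forall f, NN (Lap n w r f) <= rho * rho * NN f.
Proof.
  intros Hn [_ Hrho].
  destruct NN_Lap_bounded as [M HM].
  set (E := fun x => exists f, NN f = 1 /\ x = NN (Lap n w r f)).
  set (f0 := fun j => del 0 j * / sqrt (dr 0)).
  assert (Hf0 : NN f0 = 1).
  { unfold NN, ip, f0.
    rewrite (sumV_ext n _ (fun j => del 0 j * (dr j * / sqrt (dr 0) * / sqrt (dr 0)))).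
    - unfold del. rewrite sumV_delta by auto. pose proof (dr_pos 0).
      rewrite Rmult_assoc, <- Rinv_mult, sqrt_sqrt by lra. field. lra.
    - intros j _. unfold del. destruct (Nat.eq_dec 0 j); ring. }
  destruct (completeness E) as [mu [Hub Hlub]].
  { exists M. intros x [f [Hf ->]]. apply HM; auto. }
  { exists (NN (Lap n w r f0)), f0. auto. }
  assert (mu0 : 0 <= mu).
  { apply Rle_trans with (NN (Lap n w r f0)); [apply NN_nonneg|]. apply Hub. exists f0; auto. }
  assert (Hsup : forall f, NN (Lap n w r f) <= mu * NN f).
  { intros f. destruct (Req_dec (NN f) 0) as [Z|Z].
    - rewrite Z. assert (NN (Lap n w r f) = NN (fun _ => 0)).
      { apply NN_ext. intros j Hj. unfold Lap. rewrite (sumV_ext n _ (fun _ => 0)), sumV_const0; [ring|].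
        intros k Hk. rewrite (NN_zero f Z j), (NN_zero f Z k) by auto. ring. }
      rewrite H. unfold NN, ip. rewrite (sumV_ext n _ (fun _ => 0)), sumV_const0 by (intros; ring). lra.
    - pose proof (NN_nonneg f) as P. set (c := / sqrt (NN f)).
      assert (Hc : c * c * NN f = 1).
      { unfold c. rewrite <- Rinv_mult, sqrt_sqrt by lra. field. auto. }
      assert (Hg : NN (fun j => c * f j) = 1) by (rewrite NN_scal; auto).
      assert (Hl : NN (Lap n w r (fun j => c * f j)) <= mu) by (apply Hub; exists (fun j => c * f j); auto).
      assert (E1 : NN (Lap n w r (fun j => c * f j)) = c * c * NN (Lap n w r f)).
      { rewrite <- NN_scal. apply NN_ext. intros; apply Lap_scal. }
      rewrite E1 in Hl.
      assert (Hcc : 0 < c * c) by nra.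
      apply (Rmult_le_reg_l (c * c)); auto. replace (c * c * (mu * NN f)) with (mu * (c * c * NN f)) by ring. rewrite Hc. lra. }
  assert (Happrox : forall eps, 0 < eps -> exists f, NN f = 1 /\ mu - eps < NN (Lap n w r f)).
  { intros eps He. apply Classical_Prop.NNPP. intros Hne.
    assert (mu <= mu - eps); [|lra].
    apply Hlub. intros x [f [Hf ->]]. apply Rnot_lt_le. intros Hlt. apply Hne. exists f; auto. }
  set (T := fun f j => mu * f j - Lap n w r (Lap n w r f) j).
  assert (HT : forall f, NN f = 1 -> NN (T f) <= mu * (mu - NN (Lap n w r f))).
  { intros f Hf. unfold T. rewrite NN_sub, Hf.
    rewrite ip_comm, (ip_Lap_sym (Lap n w r f) f). fold (NN (Lap n w r f)).
    pose proof (Hsup (Lap n w r f)). nra. }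
  set (a := fun i k => mu * del i k - L2 i k).
  assert (Ta : forall f i, (i < n)%nat -> sumV n (fun k => a i k * f k) = T f i).
  { intros f i Hi. unfold a, T. rewrite LL_matrix by auto.
    rewrite (sumV_ext n _ (fun k => mu * (del i k * f k) - L2 i k * f k)) by (intros; ring).
    rewrite sumV_minus, sumV_scal. unfold del. rewrite sumV_delta by auto. reflexivity. }
  assert (Hmu : sqrt mu <= rho).
  { destruct (MC.kernel_or_bounded n a) as [[v [[j0 [Hj0 Hv]] Hker]]|[K HK]].
    - assert (LLv : forall i, (i < n)%nat -> Lap n w r (Lap n w r v) i = mu * v i).
      { intros i Hi. pose proof (Hker i Hi). rewrite Ta in H by auto. unfold T in H. lra. }
      set (s := sqrt mu).
      assert (ss : s * s = mu) by (apply sqrt_sqrt; auto).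
      assert (s0 : 0 <= s) by apply sqrt_pos.
      set (v' := fun j => Lap n w r v j + s * v j).
      destruct (Classical_Prop.classic (exists j, (j < n)%nat /\ v' j <> 0)) as [Hx|Hx].
      + assert (Ev : is_eigenvalue n w r s).
        { exists v'. split; auto. intros i Hi. unfold v' at 1.
          rewrite (Lap_ext _ (fun j => 1 * Lap n w r v j + s * v j) i); [|intros; ring|auto].
          rewrite Lap_lin, LLv by auto. unfold v'. rewrite <- ss. ring. }
        apply Hrho in Ev. rewrite Rabs_right in Ev; lra.
      + assert (Ev : is_eigenvalue n w r (- s)).
        { exists v. split; [exists j0; auto|]. intros i Hi.
          assert (v' i = 0). { apply Classical_Prop.NNPP. intros Hne. apply Hx. exists i; auto. }
          unfold v' in H. lra. }
        apply Hrho in Ev. rewrite Rabs_Ropp, Rabs_right in Ev; lra.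
    - exfalso.
      assert (Z0 : 0 <= Zc) by (unfold Zc; apply sumV_nonneg; intros; left; apply Rinv_0_lt_compat, dr_pos).
      set (SD := sumV n dr).
      assert (SD0 : 0 <= SD) by (apply sumV_nonneg; intros; left; apply dr_pos).
      set (Kc := SD * (K * K) * INR n * (INR n * Zc)).
      assert (Kc0 : 0 <= Kc).
      { unfold Kc. pose proof (pos_INR n). apply Rmult_le_pos; [apply Rmult_le_pos; [apply Rmult_le_pos|]|]; try nra. }
      set (eps := / (Kc * mu + 1)).
      assert (Heps : 0 < eps) by (apply Rinv_0_lt_compat; nra).
      destruct (Happrox eps Heps) as [f [Hf Hfl]].
      pose proof (HT f Hf) as HTf.
      set (y := T f).
      assert (Hy : NN y <= mu * eps) by (unfold y; nra).
      assert (Hfi : forall i, (i < n)%nat -> f i * f i <= (K * K) * INR n * (INR n * Zc) * NN y).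
      { intros i Hi. pose proof (HK f i Hi) as B.
        rewrite (sumV_ext n _ (fun j => Rabs (y j))) in B by (intros j Hj; rewrite Ta; auto).
        set (sa := sumV n (fun j => Rabs (y j))) in *.
        pose proof (Rabs_pos (f i)).
        assert (F2 : f i * f i <= (K * sa) * (K * sa)).
        { rewrite sq_abs. apply Rmult_le_compat; auto. }
        pose proof (sumV_abs_sq n y) as C1. fold sa in C1.
        pose proof (sum_sq_le y) as C2.
        assert (sa * sa <= INR n * (INR n * Zc * NN y)).
        { simpl in C1. rewrite Rmult_1_r in C1. eapply Rle_trans; [apply C1|].
          apply Rmult_le_compat_l; [apply pos_INR|auto]. }
        assert (K * K * (sa * sa) <= K * K * (INR n * (INR n * Zc * NN y))).
        { apply Rmult_le_compat_l; auto. apply Rle_0_sqr. }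
        replace (K * K * INR n * (INR n * Zc) * NN y) with (K * K * (INR n * (INR n * Zc * NN y))) by ring.
        replace (K * sa * (K * sa)) with (K * K * (sa * sa)) in F2 by ring. lra. }
      assert (Hsum : NN f <= Kc * NN y).
      { unfold NN at 1, ip.
        apply Rle_trans with (sumV n (fun i => (K * K * INR n * (INR n * Zc) * NN y) * dr i)).
        - apply sumV_le. intros i Hi. pose proof (Hfi i Hi). pose proof (dr_pos i).
          rewrite Rmult_assoc, Rmult_comm. apply Rmult_le_compat_r; lra.
        - rewrite sumV_scal. fold SD. unfold Kc. right; ring. }
      assert (Hee : eps * (Kc * mu + 1) = 1) by (unfold eps; field; nra).
      assert (Kc * NN y <= Kc * (mu * eps)) by (apply Rmult_le_compat_l; auto).
      nra. }
  intros f. pose proof (Hsup f). pose proof (NN_nonneg f).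
  assert (mu <= rho * rho) by (apply sqrt_sq_le; auto; apply Rle_trans with (sqrt mu); auto; apply sqrt_pos).
  nra.
Qed.

End Spec.

End Graph.

Lemma ln_lt_x x : 0 < x -> ln (1 + x) < x.
Proof.
  intros Hx. rewrite <- (ln_exp x) at 2. apply ln_increasing; [lra|]. apply exp_ineq1. lra.
Qed.

Lemma abs_of_sq x b : 0 <= b -> x * x <= b * b -> Rabs x <= b.
Proof. intros Hb H. rewrite sq_abs in H. pose proof (Rabs_pos x). nra. Qed.

Theorem mainTheorem10 (n : nat) (w : nat -> nat -> R) (r : R)
  (Hw : weighted_graph n w) (Hr : 0 <= r <= 1)
  (S : nat -> bool) (tau : R) (Htau : 0 < tau)
  (u : R -> nat -> R) (Hu : heat_solution n w r (chi S) u)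
  (rho : R) (Hrho : is_spectral_radius n w r rho) :
  (((exists i, (i < n)%nat /\ S i = true) /\ tau < tau_rho n w r rho S) \/
   ((exists i, (i < n)%nat /\ Lap n w r (chi S) i <> 0) /\ tau <= tau_kappa n w r S)) ->
  forall i, (i < n)%nat -> (u tau i >= 1 / 2 <-> S i = true).
Proof.
  intros H i Hi.
  set (k := kap n w r S).
  assert (k0 : 0 <= k) by (unfold k, kap, maxabs; apply (Rle_trans _ (Rabs (Lap n w r (chi S) i))); [apply Rabs_pos|apply maxabs_ge; auto]).
  assert (UB := u_bound n w r Hw S u Hu tau i ltac:(lra) Hi). fold k in UB.
  apply abs_le_inv in UB.
  assert (chi1 : S i = true -> chi S i = 1) by (intros E; unfold chi; rewrite E; auto).
  assert (chi0 : S i = false -> chi S i = 0) by (intros E; unfold chi; rewrite E; auto).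
  destruct H as [[[i0 [Hi0 HS0]] Ht]|[[i0 [Hi0 Hg]] Ht]].
  -
    assert (Hkt : k * tau < 1 / 2).
    { assert (Hn : (0 < n)%nat) by lia.
      assert (rho0 : 0 <= rho) by (destruct Hrho as [[lam [_ E]] _]; rewrite <- E; apply Rabs_pos).
      assert (rhop : 0 < rho).
      { destruct (Req_dec rho 0) as [E|E]; [|lra]. unfold tau_rho in Ht. rewrite E, Rinv_0 in Ht. lra. }
      set (dm := dmin n w).
      assert (dm0 : 0 < dm) by (apply dmin_pos; auto; intros; apply deg_pos; auto).
      set (vl := vol n w r S).
      assert (Evol : vl = NN n w r (chi S)).
      { unfold vl, vol, NN, ip, dr. apply sumV_ext. intros j Hj. unfold chi. destruct (S j); ring. }
      assert (vl0 : 0 < vl).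
      { rewrite Evol. pose proof (NN_term n w r (chi S) i0 Hi0) as T0. pose proof (dr_pos n w r i0).
        assert (C1 : chi S i0 = 1) by (unfold chi; rewrite HS0; auto).
        rewrite C1 in T0. lra. }
      set (p := Rpower dm (r / 2)).
      assert (p0 : 0 < p) by (unfold p, Rpower; apply exp_pos).
      assert (pp : p * p = Rpower dm r).
      { unfold p. rewrite <- Rpower_plus. f_equal. field. }
      set (beta := rho * sqrt vl / p).
      assert (beta0 : 0 < beta).
      { unfold beta. apply Rmult_lt_0_compat; [apply Rmult_lt_0_compat; auto; apply sqrt_lt_R0; auto|].
        apply Rinv_0_lt_compat; auto. }
      assert (kb : k <= beta).
      { unfold k, kap. apply maxabs_le; [lra|]. intros j Hj.
        apply abs_of_sq; [lra|].
        pose proof (NN_term n w r (Lap n w r (chi S)) j Hj) as T1.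
        pose proof (spec_bound n w r Hw Hr rho Hn Hrho (chi S)) as T2.
        rewrite <- Evol in T2.
        assert (Dj : p * p <= dr n w r j).
        { rewrite pp. unfold dr. apply Rle_Rpower_l; [lra|]. split; auto. apply dmin_le; auto. }
        set (gj := Lap n w r (chi S) j) in *.
        assert (E : beta * beta * (p * p) = rho * rho * vl).
        { unfold beta. replace (rho * sqrt vl / p * (rho * sqrt vl / p) * (p * p)) with (rho * rho * (sqrt vl * sqrt vl)) by (field; lra).
          rewrite sqrt_sqrt by lra. ring. }
        assert (gj * gj * (p * p) <= beta * beta * (p * p)).
        { rewrite E. pose proof (Rle_0_sqr gj). unfold Rsqr in H. nra. }
        apply Rmult_le_reg_r in H; nra. }
      set (a := p * Rpower vl (- (1 / 2))).
      assert (Ea : a = p / sqrt vl).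
      { unfold a. rewrite Rpower_Ropp. replace (1 / 2) with (/ 2) by field. rewrite Rpower_sqrt by auto. reflexivity. }
      assert (a0 : 0 < a) by (rewrite Ea; apply Rdiv_lt_0_compat; auto; apply sqrt_lt_R0; auto).
      assert (Eba : beta * a = rho).
      { rewrite Ea. unfold beta. assert (sqrt vl <> 0) by (apply Rgt_not_eq, sqrt_lt_R0; auto).
        field. split; auto; lra. }
      assert (Ht2 : tau < / rho * (/ 2 * a)).
      { unfold tau_rho in Ht. fold dm vl in Ht. fold p in Ht.
        replace (/ 2 * p * Rpower vl (- (1 / 2))) with (/ 2 * a) in Ht by (unfold a; ring).
        pose proof (ln_lt_x (/ 2 * a) ltac:(lra)). pose proof (Rinv_0_lt_compat rho rhop). nra. }
      assert (tau * beta < 1 / 2).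
      { apply Rlt_le_trans with (/ rho * (/ 2 * a) * beta); [nra|].
        right. replace (/ rho * (/ 2 * a) * beta) with (/ 2 * (beta * a) / rho) by (field; lra).
        rewrite Eba. field. lra. }
      nra. }
    split.
    + intros Hge. destruct (S i) eqn:E; auto. rewrite chi0 in UB by auto. lra.
    + intros E. rewrite chi1 in UB by auto. lra.
  -
    assert (kp : 0 < k).
    { pose proof (maxabs_ge n (Lap n w r (chi S)) i0 Hi0). pose proof (Rabs_pos_lt _ Hg). fold (kap n w r S) k in H. lra. }
    assert (Hkt : k * tau <= 1 / 2).
    { unfold tau_kappa in Ht. fold (kap n w r S) k in Ht.
      apply Rmult_le_compat_l with (r := k) in Ht; [|lra]. rewrite Ht. right. field. lra. }
    split.
    + intros Hge. destruct (S i) eqn:E; auto. exfalso.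
      apply (strict n w r Hw S u Hu tau i); auto.
    + intros E. rewrite chi1 in UB by auto. lra.
Qed.
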